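(* Let $\delta,\varepsilon\in[0,1)$, let $\mathscr{H},\mathscr{K}$ be complex inner product spaces and let $T:\mathscr{H}\to\mathscr{K}$ be a linear $(\delta,\varepsilon)$-orthogonality preserving mapping. If $\eta,\zeta\in\mathscr{H}\setminus\{0\}$ are orthogonal, then $$\sqrt{\frac{(1-\delta)(1-\varepsilon)}{(1+\delta)(1+\varepsilon)}}\,\|T\zeta\|\,\|\eta\|\leq\|T\eta\|\,\|\zeta\|\leq\sqrt{\frac{(1-\delta)(1+\varepsilon)}{(1+\delta)(1-\varepsilon)}}\,\|T\zeta\|\,\|\eta\|.$$
   Context: A mapping $T:\mathscr{H}\to\mathscr{K}$ between inner product spaces is $(\delta,\varepsilon)$-orthogonality preserving if for all $\eta,\zeta\in\mathscr{H}$, $|(\eta,\zeta)|\leq\delta\|\eta\|\,\|\zeta\|$ implies $|(T\eta,T\zeta)|\leq\varepsilon\|T\eta\|\,\|T\zeta\|$. *)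

(* Defs.v *)
From HB Require Import structures.
From mathcomp Require Import all_boot all_order all_algebra.
From mathcomp Require Import reals.
From mathcomp.real_closed Require Import complex.
Set Implicit Arguments. Unset Strict Implicit. Unset Printing Implicit Defensive.
Import Order.TTheory GRing.Theory Num.Theory.
Local Open Scope ring_scope.
Local Open Scope complex_scope.

Definition is_inner_product (R : realType) (V : lmodType R[i])
    (ip : V -> V -> R[i]) : Prop :=
  [/\ forall (a : R[i]) (x y z : V), ip (a *: x + y) z = a * ip x z + ip y z,
      forall x y : V, ip y x = (ip x y)^*,
      forall x : V, 0 <= ip x x
    & forall x : V, ip x x = 0 -> x = 0].

Definition ipnorm (R : realType) (V : lmodType R[i]) (ip : V -> V -> R[i])
    (x : V) : R[i] := sqrtC (ip x x).

Definition de_orth_preserving (R : realType) (V W : lmodType R[i])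
    (ipV : V -> V -> R[i]) (ipW : W -> W -> R[i]) (delta eps : R)
    (T : V -> W) : Prop :=
  forall eta zeta : V,
    `|ipV eta zeta| <= delta%:C * ipnorm ipV eta * ipnorm ipV zeta ->
    `|ipW (T eta) (T zeta)| <= eps%:C * ipnorm ipW (T eta) * ipnorm ipW (T zeta).

(* Main.v *)
Require Import Defs.
From HB Require Import structures.
From mathcomp Require Import all_boot all_order all_algebra.
From mathcomp Require Import reals.
From mathcomp.real_closed Require Import complex.
From mathcomp Require Import ring lra.
Import Order.TTheory GRing.Theory Num.Theory.
Local Open Scope ring_scope.
Local Open Scope complex_scope.

Section IP.
Variables (R : realType) (V : lmodType R[i]) (ip : V -> V -> R[i]).
Hypothesis hip : is_inner_product ip.

Lemma ipDl x y z : ip (x + y) z = ip x z + ip y z.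
Proof. move: hip => -[] h _ _ _. have := h 1 x y z. rewrite scale1r mul1r. by []. Qed.

Lemma ip0l z : ip 0 z = 0.
Proof. have := ipDl 0 0 z; rewrite addr0 -[X in X = _]addr0 => /addrI <- //.
Qed.

Lemma ipZl a x z : ip (a *: x) z = a * ip x z.
Proof. by move: hip => -[] h _ _ _; rewrite -[a *: x]addr0 h ip0l addr0. Qed.

Lemma ipsym x y : ip y x = (ip x y)^*.
Proof. by move: hip => -[]. Qed.

Lemma ipDr x y z : ip z (x + y) = ip z x + ip z y.
Proof. by rewrite (ipsym (x+y)) ipDl rmorphD /= -(ipsym x z) -(ipsym y z). Qed.

Lemma ipZr a x z : ip z (a *: x) = a^* * ip z x.
Proof. by rewrite (ipsym (a *: x)) ipZl rmorphM /= -(ipsym x z). Qed.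

Lemma ipNl x z : ip (- x) z = - ip x z.
Proof. by rewrite -scaleN1r ipZl mulN1r. Qed.

Lemma ipNr x z : ip z (- x) = - ip z x.
Proof. by rewrite -scaleN1r ipZr rmorphN1 mulN1r. Qed.

Lemma ip_real x : ip x x = (complex.Re (ip x x))%:C.
Proof. by move: hip => -[] _ _ h _; rewrite RRe_real // ger0_real. Qed.

Lemma normR x : exists2 N : R, 0 <= N & ipnorm ip x = N%:C /\ ip x x = (N ^+ 2)%:C.
Proof.
have hx : 0 <= ip x x by move: hip => -[].
have h0 : 0 <= ipnorm ip x by rewrite /ipnorm sqrtC_ge0.
have e : ipnorm ip x = (complex.Re (ipnorm ip x))%:C by rewrite RRe_real ?ger0_real.
exists (complex.Re (ipnorm ip x)); first by rewrite -ler0c -e.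
split=> //; by rewrite rmorphXn /= -e /ipnorm sqrtCK.
Qed.

Lemma conjR (r : R) : Num.conj (r%:C : R[i]) = r%:C.
Proof. by apply: conj_Creal; rewrite complex_real. Qed.

Lemma ipexp x y (al be ga de : R) :
  ip (al%:C *: x + be%:C *: y) (ga%:C *: x + de%:C *: y) =
  (al*ga)%:C * ip x x + (al*de)%:C * ip x y + (be*ga)%:C * ip y x + (be*de)%:C * ip y y.
Proof. rewrite !ipDl !ipZl !ipDr !ipZr !conjR !rmorphM /=; ring. Qed.

End IP.
Arguments ipDl {R V ip}.
Arguments ip0l {R V ip}.
Arguments ipZl {R V ip}.
Arguments ipsym {R V ip}.
Arguments ipDr {R V ip}.
Arguments ipZr {R V ip}.
Arguments ipNl {R V ip}.
Arguments ipNr {R V ip}.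
Arguments ip_real {R V ip}.
Arguments normR {R V ip}.
Arguments ipexp {R V ip}.

Lemma normCR {R : realType} (r : R) : `|(r%:C : R[i])| = `|r|%:C.
Proof. by rewrite normc_def /= expr0n /= addr0 sqrtr_sqr. Qed.

Lemma sqrtR {R : realType} (k : R) : 0 <= k ->
  exists2 K : R, 0 <= K & sqrtC (k%:C : R[i]) = K%:C /\ K ^+ 2 = k.
Proof.
move=> k0.
have h0 : 0 <= sqrtC (k%:C : R[i]) by rewrite sqrtC_ge0 ler0c.
have e : sqrtC (k%:C : R[i]) = (complex.Re (sqrtC (k%:C : R[i])))%:C
  by rewrite RRe_real ?ger0_real.
exists (complex.Re (sqrtC (k%:C : R[i]))); first by rewrite -ler0c -e.
split=> //; apply: complexI; by rewrite rmorphXn /= -e sqrtCK.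
Qed.


Theorem corollary3p2 (R : realType) (delta eps : R)
    (V W : lmodType R[i]) (ipV : V -> V -> R[i]) (ipW : W -> W -> R[i])
    (T : {linear V -> W}) (eta zeta : V) :
  0 <= delta < 1 -> 0 <= eps < 1 ->
  is_inner_product ipV -> is_inner_product ipW ->
  de_orth_preserving ipV ipW delta eps T ->
  eta != 0 -> zeta != 0 -> ipV eta zeta = 0 ->
  sqrtC (((1 - delta) * (1 - eps) / ((1 + delta) * (1 + eps)))%:C)
      * ipnorm ipW (T zeta) * ipnorm ipV eta
    <= ipnorm ipW (T eta) * ipnorm ipV zeta
  /\ ipnorm ipW (T eta) * ipnorm ipV zeta
    <= sqrtC (((1 - delta) * (1 + eps) / ((1 + delta) * (1 - eps)))%:C)
      * ipnorm ipW (T zeta) * ipnorm ipV eta.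
Proof.
move=> /andP[d0 d1] /andP[e0 e1] hV hW hT eta0 zeta0 ortho.
have [A A0 [nA sA]] := normR hV eta.
have [B B0 [nB sB]] := normR hV zeta.
have [X X0 [nX sX]] := normR hW (T eta).
have [Y Y0 [nY sY]] := normR hW (T zeta).
rewrite nA nB nX nY.
have dp : 0 < 1 + delta by lra.
have s20 : 0 <= (1 - delta) / (1 + delta) by rewrite divr_ge0 //; lra.
have [sg sg0 [_ sgE]] := sqrtR _ s20.
move: sgE; set s2 := (1 - delta) / (1 + delta) => sgE.
have hs : 1 - s2 = delta * (1 + s2).
  by rewrite /s2; field; rewrite gt_eqF.
have zeta_eta : ipV zeta eta = 0 by rewrite (ipsym hV eta zeta) ortho rmorph0.
pose u := B%:C *: eta + (sg * A)%:C *: zeta.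
pose v := B%:C *: eta + (- (sg * A))%:C *: zeta.
have [Nu Nu0 [nu su]] := normR hV u.
have [Nv Nv0 [nv sv]] := normR hV v.
have Hu : Nu ^+ 2 = B^+2 * A^+2 * (1 + s2).
  apply: complexI; rewrite -su /u ipexp // sA sB ortho zeta_eta !mulr0 !addr0 -sgE.
  rewrite !(rmorphM, rmorphD, rmorphN, rmorphXn, rmorph1) /=; ring.
have Hv : Nv ^+ 2 = B^+2 * A^+2 * (1 + s2).
  apply: complexI; rewrite -sv /v ipexp // sA sB ortho zeta_eta !mulr0 !addr0 -sgE.
  rewrite !(rmorphM, rmorphD, rmorphN, rmorphXn, rmorph1) /=; ring.
have NuNv : Nu = Nv by apply/eqP; rewrite -(@eqrXn2 _ 2) // Hu Hv.
have Huv : ipV u v = (B^+2 * A^+2 * (1 - s2))%:C.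
  rewrite /u /v ipexp // sA sB ortho zeta_eta !mulr0 !addr0 -sgE.
  rewrite !(rmorphM, rmorphD, rmorphN, rmorphXn, rmorph1) /=; ring.
have key := hT u v.
move: key; rewrite Huv nu nv normCR -!rmorphM lecR.
rewrite -NuNv ger0_norm; last by rewrite hs mulr_ge0 ?mulr_ge0 ?exprn_ge0 ?addr_ge0 //.
have -> : delta * Nu * Nu = B^+2 * A^+2 * (delta * (1 + s2)) by rewrite -mulrA -expr2 Hu; ring.
rewrite -hs lexx => /(_ isT) key.
have Tu : T u = B%:C *: T eta + (sg * A)%:C *: T zeta by rewrite /u linearD !linearZ.
have Tv : T v = B%:C *: T eta + (- (sg * A))%:C *: T zeta by rewrite /v linearD !linearZ.
have [Mu Mu0 [mu tu]] := normR hW (T u).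
have [Mv Mv0 [mv tv]] := normR hW (T v).
have cE : ipW (T zeta) (T eta) = Num.conj (ipW (T eta) (T zeta)) by apply: ipsym.
move: key tu tv; rewrite mu mv Tu Tv !ipexp // sX sY cE.
case: (ipW (T eta) (T zeta)) => c1 c2.
have -> : Num.conj (c1 +i* c2) = c1 -i* c2 by [].
move=> key tu tv.
have Eu : Mu ^+ 2 = B^+2 * X^+2 + 2 * B * sg * A * c1 + s2 * A^+2 * Y^+2.
  move: (congr1 (@complex.Re R) tu); simpc; rewrite /= => <-. rewrite -sgE. ring.
have Ev : Mv ^+ 2 = B^+2 * X^+2 - 2 * B * sg * A * c1 + s2 * A^+2 * Y^+2.
  move: (congr1 (@complex.Re R) tv); simpc; rewrite /= => <-. rewrite -sgE. ring.
have K : (B^+2 * X^+2 - s2 * A^+2 * Y^+2)^+2 + (2 * B * sg * A * c2)^+2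
    <= eps^+2 * (Mu^+2 * Mv^+2).
  move: key; rewrite -!rmorphM -(ler_pXn2r (n:=2)) ?nnegrE ?normr_ge0 ?ler0c ?mulr_ge0 //.
  rewrite -add_Re2_Im2 -rmorphXn lecR.
  set w := (_ + _ + _ + _).
  have -> : complex.Re w = B^+2 * X^+2 - s2 * A^+2 * Y^+2.
    rewrite /w; simpc; rewrite /= -sgE; ring.
  have -> : complex.Im w = - (2 * B * sg * A * c2).
    rewrite /w; simpc; rewrite /=; ring.
  rewrite sqrrN => key; apply: (le_trans key); rewrite le_eqVlt; apply/orP; left; apply/eqP; ring.
set P := B^+2 * X^+2.
set Q := s2 * A^+2 * Y^+2.
have P0 : 0 <= P by rewrite /P mulr_ge0 ?exprn_ge0.
have Q0 : 0 <= Q by rewrite /Q; apply: mulr_ge0; [apply: mulr_ge0 =>//|]; apply: exprn_ge0.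
have H1 : (P - Q)^+2 <= (eps * (P + Q))^+2.
  move: K; rewrite Eu Ev -/P -/Q.
  have Ee : eps ^+ 2 * ((P + 2 * B * sg * A * c1 + Q) * (P - 2 * B * sg * A * c1 + Q))
    = (eps * (P + Q))^+2 - eps^+2 * (2 * B * sg * A * c1)^+2 by ring.
  rewrite Ee => K.
  have := sqr_ge0 (2 * B * sg * A * c2).
  have : 0 <= eps^+2 * (2 * B * sg * A * c1)^+2 by rewrite mulr_ge0 ?sqr_ge0.
  lra.
have H23 : `|P - Q| <= eps * (P + Q).
  by rewrite -(ler_pXn2r (n:=2)) ?nnegrE ?normr_ge0 ?mulr_ge0 ?addr_ge0 // real_normK ?num_real.
move: H23; rewrite ler_norml => /andP[H2 H3].
have ep : 0 < 1 + eps by lra.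
have em : 0 < 1 - eps by lra.
split.
- have k0 : 0 <= (1 - delta) * (1 - eps) / ((1 + delta) * (1 + eps)).
    by rewrite divr_ge0 ?mulr_ge0 //; lra.
  have [K1 K10 [-> K1E]] := sqrtR _ k0.
  rewrite -!rmorphM lecR -(ler_pXn2r (n:=2)) ?nnegrE ?mulr_ge0 // !exprMn K1E.
  have -> : (1 - delta) * (1 - eps) / ((1 + delta) * (1 + eps)) * Y ^+ 2 * A ^+ 2
     = Q * (1 - eps) / (1 + eps).
    by rewrite /Q /s2; field; rewrite ?gt_eqF.
  rewrite ler_pdivrMr //; rewrite /P in H2 H3 *; lra.
- have k0 : 0 <= (1 - delta) * (1 + eps) / ((1 + delta) * (1 - eps)).
    by rewrite divr_ge0 ?mulr_ge0 //; lra.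
  have [K1 K10 [-> K1E]] := sqrtR _ k0.
  rewrite -!rmorphM lecR -(ler_pXn2r (n:=2)) ?nnegrE ?mulr_ge0 // !exprMn K1E.
  have -> : (1 - delta) * (1 + eps) / ((1 + delta) * (1 - eps)) * Y ^+ 2 * A ^+ 2
     = Q * (1 + eps) / (1 - eps).
    by rewrite /Q /s2; field; rewrite ?gt_eqF.
  rewrite ler_pdivlMr //; rewrite /P in H2 H3 *; lra.
Qed.
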